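(* Let $\phi:\mathcal{E}\to\mathcal{F}$ be a morphism of tropical vector bundles of ranks $e$ and $f$ over a tropical cycle $X$. Let $Z=\{0,1,\dots,ef\}\subseteq\mathbb{R}$, regarded as a $0$-dimensional tropical cycle (discrete topology, each point a $0$-cell with chart to $\mathbb{R}^0$, all weights equal to $1$). Then the map $\mathrm{rank}(\phi):|X|\to\mathbb{Z}$, $p\mapsto\mathrm{troprank}(\phi_p)$, takes values in $Z$ and defines a morphism of tropical cycles $X\to Z$.
   Context: $\mathbb{T}=\mathbb{R}\cup\{-\infty\}$ with $\oplus=\max$, $\odot=+$; $G(r\times s)$ are $r\times s$ tropical matrices with at most one finite entry per row. Tropical vector bundles over $X$ are given by local trivializations $U_i\times\mathbb{R}^r$ glued by transition maps into the group $G(r)$ of tropical matrices with exactly one finite entry per row and column. A morphism $\phi:\mathcal{E}\to\mathcal{F}$ commutes with projections and on common trivializations $U$ is given by $A:U\to G(f\times e)$ (entries regular invertible functions or constantly $-\infty$); the stalk map $\phi_p$ is the tropical linear map $\mathbb{T}^e\to\mathbb{T}^f$ with matrix $A(p)$. $\mathrm{troprank}(A)=k$ iff all $(k+1)\times(k+1)$ tropical minors equal $-\infty$ and some $k\times k$ minor does not. A morphism of (abstract) tropical cycles is a map sending each polyhedron into a polyhedron and which, in the local fan charts, is a morphism of fans (integer affine linear). *)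

(* Defs.v *)
From HB Require Import structures.
From mathcomp Require Import all_boot all_order all_algebra all_fingroup.
From mathcomp Require Import all_classical all_reals all_analysis.
Set Implicit Arguments. Unset Strict Implicit. Unset Printing Implicit Defensive.
Import Order.TTheory GRing.Theory Num.Theory.
Import numFieldNormedType.Exports.
Local Open Scope classical_set_scope.
Local Open Scope ring_scope.

(* Tropical numbers  T = R u {-oo}, encoded as option R (None = -oo).  *)
Definition trop (R : realType) := option R.

Definition tadd {R : realType} (a b : trop R) : trop R :=
  match a, b with
  | None, _ => b
  | _, None => a
  | Some x, Some y => Some (Num.max x y)
  end.

Definition tmul {R : realType} (a b : trop R) : trop R :=
  match a, b with
  | Some x, Some y => Some (x + y)
  | _, _ => None
  end.

Definition tmx_mul {R : realType} {m n k : nat}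
  (A : 'M[trop R]_(m, n)) (B : 'M[trop R]_(n, k)) : 'M[trop R]_(m, k) :=
  \matrix_(i, l) \big[tadd/None]_(j < n) tmul (A i j) (B j l).

Definition tid {R : realType} (r : nat) : 'M[trop R]_r :=
  \matrix_(i, j) if i == j then Some 0 else None.

Definition Gmx {R : realType} {m n : nat} (A : 'M[trop R]_(m, n)) : Prop :=
  forall i j1 j2, A i j1 <> None -> A i j2 <> None -> j1 = j2.

Definition Gsq {R : realType} {r : nat} (A : 'M[trop R]_r) : Prop :=
  Gmx A /\ Gmx A^T /\ (forall i, exists j, A i j <> None)
                  /\ (forall j, exists i, A i j <> None).

Definition tdet {R : realType} {k : nat} (A : 'M[trop R]_k) : trop R :=
  \big[tadd/None]_(s : 'S_k) \big[tmul/Some 0]_(i < k) A i (s i).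

Definition is_troprank {R : realType} {m n : nat} (A : 'M[trop R]_(m, n))
  (k : nat) : Prop :=
  (forall (fr : 'I_k.+1 -> 'I_m) (fc : 'I_k.+1 -> 'I_n),
      injective fr -> injective fc -> tdet (mxsub fr fc A) = None) /\
  (exists (fr : 'I_k -> 'I_m) (fc : 'I_k -> 'I_n),
      [/\ injective fr, injective fc & tdet (mxsub fr fc A) <> None]).

Definition intmx {R : realType} {m n : nat} (M : 'M[int]_(m, n)) : 'M[R]_(m, n) :=
  map_mx (fun z : int => z%:~R) M.

Definition int_affine {R : realType} {n m : nat}
  (h : 'rV[R]_n -> 'rV[R]_m) : Prop :=
  exists (M : 'M[int]_(n, m)) (c : 'rV[R]_m), forall x, h x = x *m intmx M + c.

Definition rat_polyhedron {R : realType} {n : nat} (P : set 'rV[R]_n) : Prop :=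
  exists (k : nat) (A : 'M[int]_(n, k)) (b : 'rV[R]_k),
    P = [set x | forall i, (x *m intmx A) 0 i <= b 0 i].

Definition rat_cone {R : realType} {n : nat} (P : set 'rV[R]_n) : Prop :=
  exists (k : nat) (A : 'M[int]_(n, k)),
    P = [set x | forall i, (x *m intmx A) 0 i <= 0].

Definition is_face {R : realType} {n : nat} (P Fc : set 'rV[R]_n) : Prop :=
  exists (a : 'cV[R]_n) (b : R),
    [/\ (forall x, P x -> (x *m a) 0 0 <= b),
        Fc = [set x | P x /\ (x *m a) 0 0 = b] & Fc !=set0].

Definition cont_on {X Y : topologicalType} (A : set X) (h : X -> Y) : Prop :=
  {within A, continuous h}.

Record tcycle (R : realType) (X : topologicalType) := TCycle {
  tc_n : nat;
  tc_cell : 'I_tc_n -> set X;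
  tc_cover : forall p : X, exists s, tc_cell s p;
  tc_edim : 'I_tc_n -> nat;
  tc_emb : forall s, X -> 'rV[R]_(tc_edim s);
  tc_emb_poly : forall s, rat_polyhedron (tc_emb s @` tc_cell s);
  tc_cell_nonempty : forall s, tc_cell s !=set0;
  tc_emb_inj : forall s x y, tc_cell s x -> tc_cell s y ->
      tc_emb s x = tc_emb s y -> x = y;
  tc_emb_cont : forall s, cont_on (tc_cell s) (tc_emb s);
  tc_emb_open : forall s (O : set X), open O ->
      exists O' : set 'rV[R]_(tc_edim s), open O' /\
        tc_emb s @` (O `&` tc_cell s) = O' `&` (tc_emb s @` tc_cell s);
  tc_faces : forall s (Fc : set 'rV[R]_(tc_edim s)),
      is_face (tc_emb s @` tc_cell s) Fc ->
      exists t, tc_cell t = tc_cell s `&` (tc_emb s @^-1` Fc);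
  tc_inter : forall s t, tc_cell s `&` tc_cell t = set0 \/
      exists u, [/\ tc_cell u = tc_cell s `&` tc_cell t,
                    is_face (tc_emb s @` tc_cell s) (tc_emb s @` tc_cell u) &
                    is_face (tc_emb t @` tc_cell t) (tc_emb t @` tc_cell u)];
  tc_compat : forall s t, tc_cell t `<=` tc_cell s ->
      exists h : 'rV[R]_(tc_edim t) -> 'rV[R]_(tc_edim s),
        int_affine h /\ forall x, tc_cell t x -> tc_emb s x = h (tc_emb t x);
  tc_chdim : X -> nat;
  tc_chdom : X -> set X;
  tc_chmap : forall q, X -> 'rV[R]_(tc_chdim q);
  tc_chdom_open : forall q, open (tc_chdom q);
  tc_chdom_in : forall q, tc_chdom q q;
  tc_ch_inj : forall q x y, tc_chdom q x -> tc_chdom q y ->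
      tc_chmap q x = tc_chmap q y -> x = y;
  tc_ch_cont : forall q, cont_on (tc_chdom q) (tc_chmap q);
  tc_ch_open : forall q (O : set X), open O ->
      exists O' : set 'rV[R]_(tc_chdim q), open O' /\
        tc_chmap q @` (O `&` tc_chdom q) = O' `&` (tc_chmap q @` tc_chdom q);
  tc_ch_fan : forall q, exists (k : nat) (cones : 'I_k -> set 'rV[R]_(tc_chdim q)),
      (forall i, rat_cone (cones i)) /\
      exists O' : set 'rV[R]_(tc_chdim q), open O' /\
        tc_chmap q @` tc_chdom q = O' `&` \bigcup_(i in [set: 'I_k]) cones i;
  tc_ch_cell : forall q s,
      exists h : 'rV[R]_(tc_edim s) -> 'rV[R]_(tc_chdim q),
        int_affine h /\
        forall x, tc_chdom q x -> tc_cell s x -> tc_chmap q x = h (tc_emb s x);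
  tc_weight : 'I_tc_n -> nat;
  tc_weight_pos : forall s,
      (forall t, tc_cell s `<=` tc_cell t -> tc_cell t `<=` tc_cell s) ->
      (0 < tc_weight s)%N
}.

Arguments tc_cell {R X} _ _.
Arguments tc_chdom {R X} _ _.
Arguments tc_chdim {R X} _ _.
Arguments tc_chmap {R X} _ _.

Definition reg_inv {R : realType} {X : topologicalType} (C : tcycle R X)
  (U : set X) (g : X -> R) : Prop :=
  forall p, U p -> exists q, exists2 W : set X,
      [/\ open W, W p & W `<=` U `&` tc_chdom C q] &
      exists (a : 'cV[int]_(tc_chdim C q)) (b : R),
        forall x, W x -> g x = (tc_chmap C q x *m intmx a) 0 0 + b.

Definition reg_entries {R : realType} {X : topologicalType} (C : tcycle R X)
  {m n : nat} (U : set X) (M : X -> 'M[trop R]_(m, n)) : Prop :=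
  forall a b, (forall p, U p -> M p a b = None) \/
    exists2 g, reg_inv C U g & forall p, U p -> M p a b = Some (g p).

(* Convention: coordinates in chart j = vb_trans i j (.) coordinates   *)
(* in chart i.                                                          *)
Record tvbundle (R : realType) (X : topologicalType) (C : tcycle R X)
  (r : nat) := TVBundle {
  vb_idx : Type;
  vb_U : vb_idx -> set X;
  vb_U_open : forall i, open (vb_U i);
  vb_cover : forall p, exists i, vb_U i p;
  vb_trans : vb_idx -> vb_idx -> X -> 'M[trop R]_r;
  vb_trans_G : forall i j p, vb_U i p -> vb_U j p -> Gsq (vb_trans i j p);
  vb_trans_reg : forall i j, reg_entries C (vb_U i `&` vb_U j) (vb_trans i j);
  vb_cocycle_id : forall i p, vb_U i p -> vb_trans i i p = tid r;
  vb_cocycle : forall i j k p, vb_U i p -> vb_U j p -> vb_U k p ->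
      tmx_mul (vb_trans j k p) (vb_trans i j p) = vb_trans i k p
}.

Arguments vb_U {R X C r} _ _.
Arguments vb_trans {R X C r} _ _ _.

Record tvmorph (R : realType) (X : topologicalType) (C : tcycle R X)
  (e f : nat) (E : tvbundle C e) (F : tvbundle C f) := TVMorph {
  mo_A : vb_idx E -> vb_idx F -> X -> 'M[trop R]_(f, e);
  mo_G : forall i j p, vb_U E i p -> vb_U F j p -> Gmx (mo_A i j p);
  mo_reg : forall i j, reg_entries C (vb_U E i `&` vb_U F j) (mo_A i j);
  mo_compat : forall i i' j j' p,
      vb_U E i p -> vb_U E i' p -> vb_U F j p -> vb_U F j' p ->
      tmx_mul (mo_A i' j' p) (vb_trans E i i' p)
      = tmx_mul (vb_trans F j j' p) (mo_A i j p)
}.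

Arguments mo_A {R X C e f E F} _ _ _.

Definition Zpts {R : realType} (n : nat) : set R :=
  [set x | exists2 k : nat, (k <= n)%N & x = k%:R].

(* A morphism X -> Z: values in |Z|, each polyhedron of X is sent into a
   polyhedron {z} of Z, and locally (on an open piece of a fan chart of X
   mapped into the open star {g p} of the 0-cell of Z containing g p) the
   map, read in the fan charts (the chart of Z at a point being the map to
   R^0), is integer affine linear. *)
Definition trop_morph_to_Z {R : realType} {X : topologicalType}
  (C : tcycle R X) (n : nat) (g : X -> R) : Prop :=
  [/\ (forall p, Zpts n (g p)),
      (forall s, exists2 z, Zpts n z & g @` tc_cell C s `<=` [set z]) &
      (forall p, exists q, exists2 O : set X,
          [/\ open O, O p & O `<=` tc_chdom C q] &
          g @` O `<=` [set g p] /\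
          exists h : 'rV[R]_(tc_chdim C q) -> 'rV[R]_0,
            int_affine h /\
            forall x, O x -> (fun _ : R => (0 : 'rV[R]_0)) (g x) = h (tc_chmap C q x))].

(* Main.v *)
Require Import Defs.
From HB Require Import structures.
From mathcomp Require Import all_boot all_order all_algebra all_fingroup.
From mathcomp Require Import all_classical all_reals all_analysis.
From mathcomp Require Import lra.
Import Order.TTheory GRing.Theory Num.Theory.
Import numFieldNormedType.Exports.
Local Open Scope classical_set_scope.
Local Open Scope ring_scope.
Set Implicit Arguments. Unset Strict Implicit.
Section Trop.
Variable R : realType.

Lemma tadd_big_None (I : eqType) (r : seq I) (F : I -> trop R) :
  \big[tadd/None]_(i <- r) F i = None <-> forall i, i \in r -> F i = None.
Proof.
elim: r => [|a r IH]; first by rewrite big_nil; split=> // _ i; rewrite in_nil.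
rewrite big_cons; split.
- case Fa: (F a) => [x|]; case B: (\big[tadd/None]_(i <- r) F i) => [y|] //=.
  move=> _ i; rewrite in_cons => /orP[/eqP->//|]; by move: i; apply/IH.
- move=> H; have -> : F a = None by apply: H; rewrite mem_head.
  have -> // : \big[tadd/None]_(i <- r) F i = None.
  by apply/IH => i ir; apply: H; rewrite in_cons ir orbT.
Qed.

Lemma tmul_nN (a b : trop R) : tmul a b <> None <-> a <> None /\ b <> None.
Proof. case: a => [x|]; case: b => [y|] /=; intuition congruence. Qed.

Lemma tmul_big_nN (I : eqType) (r : seq I) (F : I -> trop R) :
  \big[tmul/Some 0]_(i <- r) F i <> None <-> forall i, i \in r -> F i <> None.
Proof.
elim: r => [|a r IH]; first by rewrite big_nil; split=> // _ i; rewrite in_nil.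
rewrite big_cons; split.
- move=> /tmul_nN [Ha /IH Hr] i; rewrite in_cons => /orP[/eqP->//|]; apply: Hr.
- move=> H; apply/tmul_nN; split; first by apply: H; rewrite mem_head.
  by apply/IH => i ir; apply: H; rewrite in_cons ir orbT.
Qed.

Lemma tadd_big_nN (I : finType) (F : I -> trop R) :
  \big[tadd/None]_(i : I) F i <> None <-> exists i, F i <> None.
Proof.
split.
- move=> H; apply: contrapT => Hn; apply: H; apply/tadd_big_None => i _.
  by apply: contrapT => Hi; apply: Hn; exists i.
- move=> [i Hi] /tadd_big_None H; apply: Hi; apply: H; exact: mem_index_enum.
Qed.

Lemma tdet_nN k (M : 'M[trop R]_k) :
  tdet M <> None <-> exists s : 'S_k, forall i, M i (s i) <> None.
Proof.
rewrite /tdet; split => [/tadd_big_nN|] [s Hs]; [exists s| apply/tadd_big_nN; exists s].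
- by move=> i; move/tmul_big_nN: Hs; apply; exact: mem_index_enum.
- by apply/tmul_big_nN => i _; apply: Hs.
Qed.

Definition matching m n (M : 'M[trop R]_(m, n)) k :=
  exists (fr : 'I_k -> 'I_m) (fc : 'I_k -> 'I_n),
    [/\ injective fr, injective fc & forall t, M (fr t) (fc t) <> None].

Lemma minor_match m n (M : 'M[trop R]_(m, n)) k :
  (exists (fr : 'I_k -> 'I_m) (fc : 'I_k -> 'I_n),
      [/\ injective fr, injective fc & tdet (mxsub fr fc M) <> None])
  <-> matching M k.
Proof.
split.
- move=> [fr [fc [ifr ifc /tdet_nN [s Hs]]]].
  exists fr, (fun t => fc (s t)); split => //.
  + by move=> x y /ifc /perm_inj.
  + by move=> t; have := Hs t; rewrite mxE.
- move=> [fr [fc [ifr ifc H]]]; exists fr, fc; split => //.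
  by apply/tdet_nN; exists 1%g => i; rewrite mxE perm1.
Qed.

Lemma troprank_match m n (M : 'M[trop R]_(m, n)) k :
  is_troprank M k <-> matching M k /\ ~ matching M k.+1.
Proof.
split.
- move=> [H1 H2]; split; first exact/minor_match.
  move=> /minor_match [fr [fc [ifr ifc H]]]; apply: H; exact: H1.
- move=> [H1 H2]; split; last exact/minor_match.
  move=> fr fc ifr ifc; apply: contrapT => H; apply: H2.
  by apply/minor_match; exists fr, fc.
Qed.

Lemma match_le m n (M : 'M[trop R]_(m, n)) k k' :
  matching M k -> (k' <= k)%N -> matching M k'.
Proof.
move=> [fr [fc [ifr ifc H]]] le.
exists (fun t => fr (widen_ord le t)), (fun t => fc (widen_ord le t)); split.
- by move=> x y /ifr /(congr1 val) /= /val_inj.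
- by move=> x y /ifc /(congr1 val) /= /val_inj.
- by move=> t; apply: H.
Qed.

Lemma match_bound m n (M : 'M[trop R]_(m, n)) k :
  matching M k -> (k <= m)%N /\ (k <= n)%N.
Proof.
move=> [fr [fc [ifr ifc _]]]; split.
- have := card_codom ifr; rewrite card_ord => <-.
  by rewrite -[X in (_ <= X)%N](card_ord m) max_card.
- have := card_codom ifc; rewrite card_ord => <-.
  by rewrite -[X in (_ <= X)%N](card_ord n) max_card.
Qed.

Lemma I0_fun (T : Type) : 'I_0 -> T.
Proof. by move=> [t ht]; exfalso; rewrite ltn0 in ht. Qed.

Lemma match0 m n (M : 'M[trop R]_(m, n)) : matching M 0.
Proof.
exists (I0_fun _), (I0_fun _); split; by move=> [t ht]; exfalso; rewrite ltn0 in ht.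
Qed.

Lemma rank_exists m n (M : 'M[trop R]_(m, n)) :
  exists k, [/\ (k <= m)%N, (k <= n)%N & is_troprank M k].
Proof.
have exP : exists k, `[< matching M k >] by exists 0%N; apply/asboolP; exact: match0.
have ubP : forall k, `[< matching M k >] -> (k <= m)%N.
  by move=> k /asboolP /match_bound [].
case: (ex_maxnP exP ubP) => k /asboolP Hk Hmax.
exists k; have [h1 h2] := match_bound Hk; split => //.
apply/troprank_match; split => // /asboolP /Hmax; by rewrite ltnn.
Qed.

Lemma rank_unique m n (M : 'M[trop R]_(m, n)) k1 k2 :
  is_troprank M k1 -> is_troprank M k2 -> k1 = k2.
Proof.
move=> /troprank_match [a1 b1] /troprank_match [a2 b2].
case: (ltngtP k1 k2) => // h.
- by exfalso; apply: b1; apply: match_le a2 _.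
- by exfalso; apply: b2; apply: match_le a1 _.
Qed.

Lemma match_transfer m n (M N : 'M[trop R]_(m, n)) (rho : 'S_m) (tau : 'S_n) :
  (forall a c, N a (tau c) <> None <-> M (rho a) c <> None) ->
  forall k, matching M k <-> matching N k.
Proof.
move=> H k; split.
- move=> [fr [fc [ifr ifc Hf]]].
  exists (fun t => (rho^-1)%g (fr t)), (fun t => tau (fc t)); split.
  + by move=> x y /perm_inj /ifr.
  + by move=> x y /perm_inj /ifc.
  + by move=> t; apply/H; rewrite permKV.
- move=> [fr [fc [ifr ifc Hf]]].
  exists (fun t => rho (fr t)), (fun t => (tau^-1)%g (fc t)); split.
  + by move=> x y /perm_inj /ifr.
  + by move=> x y /perm_inj /ifc.
  + by move=> t; apply/H; rewrite permKV.
Qed.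

Lemma rank_transfer m n (M N : 'M[trop R]_(m, n)) (rho : 'S_m) (tau : 'S_n) :
  (forall a c, N a (tau c) <> None <-> M (rho a) c <> None) ->
  forall k, is_troprank M k -> is_troprank N k.
Proof.
move=> H k /troprank_match [h1 h2]; apply/troprank_match.
by split; [apply/(match_transfer H)|move/(match_transfer H)].
Qed.

End Trop.
Section Gsq.
Variable R : realType.

Definition colsel r (T : 'M[trop R]_r) (c : 'I_r) : 'I_r :=
  if [pick i | T i c != None] is Some i then i else c.
Definition rowsel r (T : 'M[trop R]_r) (a : 'I_r) : 'I_r :=
  if [pick j | T a j != None] is Some j then j else a.

Lemma colselP r (T : 'M[trop R]_r) c : Gsq T -> T (colsel T c) c <> None.
Proof.
move=> [_ [_ [_ H]]]; rewrite /colsel; case: pickP => [i /eqP //|].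
move=> H0; exfalso; have [i Hi] := H c; apply: Hi.
by have := H0 i; move/negbT/negPn/eqP.
Qed.

Lemma rowselP r (T : 'M[trop R]_r) a : Gsq T -> T a (rowsel T a) <> None.
Proof.
move=> [_ [_ [H _]]]; rewrite /rowsel; case: pickP => [i /eqP //|].
move=> H0; exfalso; have [i Hi] := H a; apply: Hi.
by have := H0 i; move/negbT/negPn/eqP.
Qed.

Lemma colsel_inj r (T : 'M[trop R]_r) : Gsq T -> injective (colsel T).
Proof.
move=> G c1 c2 E; have h1 : T (colsel T c1) c1 <> None := colselP G.
have h2 : T (colsel T c2) c2 <> None := colselP G.
rewrite E in h1; case: G => [G _]; exact: G h1 h2.
Qed.

Lemma rowsel_inj r (T : 'M[trop R]_r) : Gsq T -> injective (rowsel T).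
Proof.
move=> G c1 c2 E; have h1 : T c1 (rowsel T c1) <> None := rowselP G.
have h2 : T c2 (rowsel T c2) <> None := rowselP G.
rewrite E in h1; case: G => [_ [G _]]; apply: (G (rowsel T c2)); by rewrite mxE.
Qed.

Lemma colsel_uniq r (T : 'M[trop R]_r) b c : Gsq T -> T b c <> None -> b = colsel T c.
Proof.
move=> G h; have h2 : T (colsel T c) c <> None := colselP G; case: G => [_ [G _]]; apply: (G c); by rewrite mxE.
Qed.

Lemma rowsel_uniq r (T : 'M[trop R]_r) a b : Gsq T -> T a b <> None -> b = rowsel T a.
Proof.
move=> G h; have h2 : T a (rowsel T a) <> None := rowselP G; case: G => [G _]; exact: G h h2.
Qed.

Lemma mulR_pat m r (M : 'M[trop R]_(m, r)) (T : 'M[trop R]_r) : Gsq T ->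
  forall a c, tmx_mul M T a c <> None <-> M a (colsel T c) <> None.
Proof.
move=> G a c; rewrite mxE; split.
- move=> /tadd_big_nN [j /tmul_nN [h1 h2]]; by rewrite -(colsel_uniq G h2).
- move=> h; apply/tadd_big_nN; exists (colsel T c); apply/tmul_nN; split => //.
  exact: colselP.
Qed.

Lemma mulL_pat r n (T : 'M[trop R]_r) (M : 'M[trop R]_(r, n)) : Gsq T ->
  forall a c, tmx_mul T M a c <> None <-> M (rowsel T a) c <> None.
Proof.
move=> G a c; rewrite mxE; split.
- move=> /tadd_big_nN [j /tmul_nN [h1 h2]]; by rewrite -(rowsel_uniq G h1).
- move=> h; apply/tadd_big_nN; exists (rowsel T a); apply/tmul_nN; split => //.
  exact: rowselP.
Qed.

Lemma compat_rank e f (A A' : 'M[trop R]_(f, e)) (TE : 'M[trop R]_e) (TF : 'M[trop R]_f) :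
  Gsq TE -> Gsq TF -> tmx_mul A' TE = tmx_mul TF A ->
  forall k, is_troprank A k -> is_troprank A' k.
Proof.
move=> GE GF Hc; apply: (@rank_transfer _ _ _ _ _ (perm (rowsel_inj GF)) (perm (colsel_inj GE))).
move=> a c; rewrite !permE -(mulR_pat _ GE) Hc; exact: mulL_pat.
Qed.

Lemma pattern_rank m n (M N : 'M[trop R]_(m, n)) :
  (forall a c, N a c <> None <-> M a c <> None) ->
  forall k, is_troprank M k -> is_troprank N k.
Proof.
move=> H; apply: (@rank_transfer _ _ _ _ _ 1%g 1%g) => a c; rewrite !perm1; exact: H.
Qed.

End Gsq.
Section Cell.
Variables (R : realType) (X : topologicalType) (C : tcycle R X).

Lemma level_open (g : X -> nat) (W : X -> set X) (Q : nat -> Prop) :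
  (forall p, open (W p)) -> (forall p, W p p) -> (forall p x, W p x -> g x = g p) ->
  open [set x | Q (g x)].
Proof.
move=> oW Wp Wg.
have -> : [set x | Q (g x)] = \bigcup_(p in [set x | Q (g x)]) W p.
  apply/seteqP; split => x.
  - by move=> Qx; exists x.
  - by move=> [p Qp Wx] /=; rewrite (Wg _ _ Wx).
by apply: bigcup_open => p _; exact: oW.
Qed.

Lemma cell_const (g : X -> nat) (W : X -> set X) :
  (forall p, open (W p)) -> (forall p, W p p) -> (forall p x, W p x -> g x = g p) ->
  forall s x y, tc_cell C s x -> tc_cell C s y -> g y = g x.
Proof.
move=> oW Wp Wg s x y Sx Sy.
apply: contrapT => Hne.
pose v := g x.
have oA : open [set z | g z = v] := level_open (fun n => n = v) oW Wp Wg.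
have oB : open [set z | g z <> v] := level_open (fun n => n <> v) oW Wp Wg.
have [OA [oOA eqA]] := tc_emb_open (t0:=C) s oA.
have [OB [oOB eqB]] := tc_emb_open (t0:=C) s oB.
set emb := tc_emb s in eqA eqB *.
set S := tc_cell C s in Sx Sy eqA eqB *.
have keyA : forall w, S w -> (OA (emb w) <-> g w = v).
  move=> w Sw; split.
  - move=> h; have : (OA `&` (emb @` S)) (emb w) by split => //; exists w.
    rewrite -eqA => -[w' [Aw' Sw'] E]; by rewrite -(tc_emb_inj Sw' Sw E).
  - move=> h; have : (emb @` ([set z | g z = v] `&` S)) (emb w) by exists w.
    by rewrite eqA => -[].
have keyB : forall w, S w -> (OB (emb w) <-> g w <> v).
  move=> w Sw; split.
  - move=> h; have : (OB `&` (emb @` S)) (emb w) by split => //; exists w.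
    rewrite -eqB => -[w' [Aw' Sw'] E]; by rewrite -(tc_emb_inj Sw' Sw E).
  - move=> h; have : (emb @` ([set z | g z <> v] `&` S)) (emb w) by exists w.
    by rewrite eqB => -[].
have [k [Mi [b eqP]]] := tc_emb_poly (t0:=C) s.
rewrite -/emb -/S in eqP.
pose y0 := emb x; pose y1 := emb y.
pose gam := fun t : R => y0 + t *: (y1 - y0).
have gP : forall t, 0 <= t <= 1 -> (emb @` S) (gam t).
  move=> t /andP[t0 t1]; rewrite eqP => i /=.
  have h0 : (y0 *m intmx Mi) 0 i <= b 0 i.
    have : (emb @` S) y0 by exists x.
    by rewrite eqP; apply.
  have h1 : (y1 *m intmx Mi) 0 i <= b 0 i.
    have : (emb @` S) y1 by exists y.
    by rewrite eqP; apply.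
  rewrite /gam mulmxDl -scalemxAl mulmxBl.
  move: h0 h1; set A0 := y0 *m intmx Mi; set A1 := y1 *m intmx Mi.
  rewrite !mxE => h0 h1; nra.
have cg : connected (gam @` `[0, 1]).
  apply: connected_continuous_connected; first exact: segment_connected.
  apply: continuous_subspaceT => t.
  rewrite /gam; apply: cvgD; first exact: cvg_cst.
  apply: cvgZr_tmp; exact: cvg_id.
have gam0 : gam 0 = y0 by rewrite /gam scale0r addr0.
have gam1 : gam 1 = y1 by rewrite /gam scale1r addrC subrK.
have Hb : gam @` `[0, 1] `&` OA = gam @` `[0, 1].
  apply: cg.
  - exists y0; split; first by exists 0 => //; rewrite /= in_itv /= lexx ler01.
    by apply/keyA.
  - by exists OA.
  - exists (~` OB); first exact: open_closedC.
    apply/seteqP; split => z [[u tI <-] h]; (split; first by exists u).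
    + have : (emb @` S) (gam u) by apply: gP; move: tI; rewrite /= in_itv /=.
      move=> [w Sw Ew]; rewrite -Ew in h *; have hv := (keyA w Sw).1 h.
      by move=> /= /(keyB w Sw).1.
    + have : (emb @` S) (gam u) by apply: gP; move: tI; rewrite /= in_itv /=.
      move=> [w Sw Ew]; rewrite -Ew in h *; apply/(keyA w Sw).
      by apply: contrapT => hw; apply: h; apply/(keyB w Sw).
have : (gam @` `[0, 1] `&` OA) y1 by rewrite Hb; exists 1 => //; rewrite /= in_itv /= lexx ler01.
move=> [_ /(keyA y Sy) hy]; exact: (Hne hy).
Qed.

End Cell.
Theorem mainTheorem5 (R : realType) (X : topologicalType) (C : tcycle R X)
  (e f : nat) (E : tvbundle C e) (F : tvbundle C f) (phi : tvmorph E F) :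
  exists rk : X -> nat,
    [/\ (forall p, (rk p <= e * f)%N),
        (forall i j p, vb_U E i p -> vb_U F j p ->
           is_troprank (mo_A phi i j p) (rk p)) &
        trop_morph_to_Z C (e * f) (fun p => (rk p)%:R)].
Proof.
pose i0 := fun p => projT1 (cid (vb_cover E p)).
pose j0 := fun p => projT1 (cid (vb_cover F p)).
have Hi0 : forall p, vb_U E (i0 p) p := fun p => projT2 (cid (vb_cover E p)).
have Hj0 : forall p, vb_U F (j0 p) p := fun p => projT2 (cid (vb_cover F p)).
pose rk := fun p => projT1 (cid (rank_exists (mo_A phi (i0 p) (j0 p) p))).
have Hrk : forall p, [/\ (rk p <= f)%N, (rk p <= e)%N &
    is_troprank (mo_A phi (i0 p) (j0 p) p) (rk p)] :=
  fun p => projT2 (cid (rank_exists (mo_A phi (i0 p) (j0 p) p))).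
have bnd : forall p, (rk p <= e * f)%N.
  move=> p; have [h1 h2 _] := Hrk p.
  have [e0|ep] := posnP e; first by move: h2; rewrite e0 leqn0 => /eqP ->.
  by apply: (leq_trans h1); rewrite leq_pmull.
have rk_ok : forall i j p, vb_U E i p -> vb_U F j p ->
    is_troprank (mo_A phi i j p) (rk p).
  move=> i j p Ui Vj; have [_ _ H] := Hrk p.
  apply: (compat_rank (TE := vb_trans E (i0 p) i p) (TF := vb_trans F (j0 p) j p) _ _ _ H).
  - exact: vb_trans_G.
  - exact: vb_trans_G.
  - exact: mo_compat.
pose W := fun p => vb_U E (i0 p) `&` vb_U F (j0 p) `&` tc_chdom C p.
have oW : forall p, open (W p).
  move=> p; apply: openI; last exact: tc_chdom_open.
  by apply: openI; apply: vb_U_open.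
have Wp : forall p, W p p.
  by move=> p; split; [split|exact: tc_chdom_in].
have Wg : forall p x, W p x -> rk x = rk p.
  move=> p x [[Ux Vx] _].
  apply: (rank_unique (M := mo_A phi (i0 p) (j0 p) x)); first exact: rk_ok.
  apply: (pattern_rank (M := mo_A phi (i0 p) (j0 p) p)); last exact: rk_ok.
  move=> a c; case: (mo_reg phi (i0 p) (j0 p) a c) => [H | [g _ H]].
  - by rewrite !H //; split.
  - by rewrite !H //; split.
exists rk; split => //; split.
- by move=> p; exists (rk p).
- move=> s; have [p0 Sp0] := tc_cell_nonempty s.
  exists (rk p0)%:R; first by exists (rk p0).
  move=> z [x Sx <-] /=; by rewrite (cell_const oW Wp Wg Sp0 Sx).
- move=> p; exists p; exists (W p).
    by split => //; move=> x [].
  split.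
  + by move=> z [x Wx <-] /=; rewrite (Wg p x Wx).
  + exists (fun _ => 0); split => //.
    by exists 0, 0 => x; apply/rowP => -[].
Qed.
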